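(* Let $M=p_1^{n_1}\cdots p_K^{n_K}$ with distinct primes $p_\nu$ and $n_\nu\in\mathbb{N}$, and $R=\{r\in\mathbb{Z}_M:(r,M)=1\}$. For $\nu=1,\dots,K$, let $x_\nu,x'_\nu\in\mathbb{Z}_M$ with $(x_\nu,M)=(x'_\nu,M)=M/p_\nu^{\alpha_\nu}$, where $\alpha_1,\dots,\alpha_K\ge1$. Then there exists $r\in R$ such that $rx_\nu=x'_\nu$ for all $\nu=1,\dots,K$.
   Context: $(x,M)$ denotes $\gcd(x,M)$ for $x\in\mathbb{Z}_M$. *)

(* Defs.v *)
From mathcomp Require Import all_boot.
(* Z_M is modelled as 'I_M (residues 0..M-1) with multiplication mod M;
   (x,M) is gcdn x M (so (0,M) = M, as in Z_M). *)

(* Main.v *)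
Require Import Defs.
From mathcomp Require Import all_boot all_fingroup all_solvable.
Lemma decomp (x M q : nat) : 0 < M -> gcdn x M * q = M ->
  coprime (x %/ gcdn x M) q /\ x = x %/ gcdn x M * gcdn x M.
Proof.
move=> M0 h.
have g0 : 0 < gcdn x M by rewrite gcdn_gt0 M0 orbT.
have ex : x = x %/ gcdn x M * gcdn x M by rewrite divnK // dvdn_gcdl.
split=> //.
have : gcdn (x %/ gcdn x M) q * gcdn x M = 1 * gcdn x M.
  by rewrite muln_gcdl -ex mulnC h mul1n.
by move/eqP; rewrite eqn_pmul2r // => /eqP.
Qed.

Lemma coprime_bigr (I : Type) (s : seq I) (P : pred I) (F : I -> nat) m :
  (forall i, P i -> coprime m (F i)) -> coprime m (\prod_(i <- s | P i) F i).
Proof.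
move=> H; apply: (big_ind (fun k => coprime m k)) => //.
- exact: coprimen1.
- by move=> a b ha hb; rewrite coprimeMr ha hb.
Qed.

Lemma crt_seq (I : eqType) (s : seq I) (m t : I -> nat) :
  uniq s -> (forall i j, i \in s -> j \in s -> i != j -> coprime (m i) (m j)) ->
  exists r, forall i, i \in s -> r = t i %[mod m i].
Proof.
elim: s => [|a s IH] /=; first by move=> _ _; exists 0.
move=> /andP [as_ us] hc.
have [r' hr'] : exists r, forall i, i \in s -> r = t i %[mod m i].
  apply: IH => // i j hi hj; apply: hc; rewrite inE ?hi ?hj orbT //.
have cop : coprime (m a) (\prod_(j <- s) m j).
  rewrite big_seq; apply: coprime_bigr => j hj.
  apply: hc; rewrite ?inE ?eqxx ?hj ?orbT //.
  by apply/eqP => ea; rewrite ea hj in as_.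
exists (chinese (m a) (\prod_(j <- s) m j) (t a) r') => i; rewrite inE => /orP [/eqP -> | hi].
  exact: chinese_modl.
have hd : m i %| \prod_(j <- s) m j.
  by rewrite (bigD1_seq i) //= dvdn_mulr.
rewrite -hr' // -(modn_dvdm _ hd) chinese_modr // modn_dvdm.
all: by [].
Qed.

Theorem lemma3p6 (K : nat) (p n : 'I_K -> nat)
  (p_prime : forall nu, prime (p nu))
  (p_inj : injective p)
  (alpha : 'I_K -> nat) (alpha_pos : forall nu, 0 < alpha nu)
  (x x' : 'I_K -> 'I_(\prod_(i < K) p i ^ n i))
  (hx : forall nu, gcdn (x nu) (\prod_(i < K) p i ^ n i) * p nu ^ alpha nu
                   = \prod_(i < K) p i ^ n i)
  (hx' : forall nu, gcdn (x' nu) (\prod_(i < K) p i ^ n i) * p nu ^ alpha nu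
                   = \prod_(i < K) p i ^ n i) :
  exists r : 'I_(\prod_(i < K) p i ^ n i),
    coprime r (\prod_(i < K) p i ^ n i) /\
    forall nu, (r * x nu) %% (\prod_(i < K) p i ^ n i) = x' nu.
Proof.
have Mpos : 0 < \prod_(i < K) p i ^ n i.
  by apply: prodn_gt0 => i; rewrite expn_gt0 prime_gt0.
pose g nu := gcdn (x nu) (\prod_(i < K) p i ^ n i).
pose u nu := x nu %/ g nu.
pose u' nu := x' nu %/ gcdn (x' nu) (\prod_(i < K) p i ^ n i).
have hgg : forall nu, gcdn (x' nu) (\prod_(i < K) p i ^ n i) = g nu.
  move=> nu; apply/eqP; have hp : 0 < p nu ^ alpha nu by rewrite expn_gt0 prime_gt0.
  by rewrite -(eqn_pmul2r hp) hx hx'.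
have Hu : forall nu, coprime (u nu) (p nu ^ alpha nu) /\ (x nu : nat) = u nu * g nu.
  by move=> nu; apply: decomp.
have Hu' : forall nu, coprime (u' nu) (p nu ^ alpha nu) /\ (x' nu : nat) = u' nu * g nu.
  by move=> nu; rewrite -hgg; apply: decomp.
pose t nu := u' nu * u nu ^ (totient (p nu ^ alpha nu)).-1.
have [r hr] : exists r, forall i, i \in enum 'I_K -> r = t i %[mod p i ^ alpha i].
  apply: crt_seq; first exact: enum_uniq.
  move=> i j _ _ ij; apply: coprimeXl; apply: coprimeXr.
  rewrite prime_coprime // dvdn_prime2 //.
  by apply: contra ij => /eqP /p_inj ->.
have hr' : forall nu, r = t nu %[mod p nu ^ alpha nu] by move=> nu; apply: hr; rewrite mem_enum.
have ct : forall nu, coprime (t nu) (p nu ^ alpha nu).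
  move=> nu; rewrite coprimeMl (proj1 (Hu' nu)) /=; apply: coprimeXl; exact: (proj1 (Hu nu)).
exists (Ordinal (ltn_pmod r Mpos)); split.
  rewrite /= coprime_modl. apply: (@coprime_bigr 'I_K (index_enum _) xpredT (fun i => p i ^ n i)) => i _.
  apply: coprimeXr.
  rewrite -(coprime_pexpr _ _ (alpha_pos i)) -coprime_modl hr' coprime_modl.
  exact: ct.
move=> nu /=.
rewrite modnMml (proj2 (Hu nu)) (proj2 (Hu' nu)) -(hx nu) mulnA [g nu * _]mulnC -muln_modl.
congr (_ * _).
have hp : 0 < p nu ^ alpha nu by rewrite expn_gt0 prime_gt0.
rewrite -modnMml hr' modnMml /t -mulnA -expnSr prednK ?totient_gt0 //.
rewrite -modnMmr Euler_exp_totient ?(proj1 (Hu nu)) // modnMmr muln1 modn_small //.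
have g0 : 0 < g nu by rewrite /g gcdn_gt0 Mpos orbT.
rewrite -(ltn_pmul2r g0) -(proj2 (Hu' nu)) mulnC hx.
exact: ltn_ord.
Qed.
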